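(* Let $G$ be a non-abelian subgroup of $\mathcal{H}(n,\mathbb{C})$ with $\Lambda_G\not\subset\mathbb{R}$ and $G\subset\mathcal{SR}_n$. Then $G$ has a dense orbit in $\mathbb{C}^n$ if and only if $\overline{G_1(0)}=\mathbb{C}^n$.
   Context: $\mathcal{H}(n,\mathbb{C})$ is the group of all maps $z\mapsto\lambda z+b$ of $\mathbb{C}^n$ with $\lambda\in\mathbb{C}^*$, $b\in\mathbb{C}^n$ ($\lambda$ = ratio); $\mathcal{T}_n$ = subgroup of translations. $H_2=(\frac{\pi}{2}+\pi\mathbb{Z})\cup\pi\mathbb{Z}$, $F_2=\{e^{ix}:x\in H_2\}$, $H_3=(\frac{\pi}{3}+\pi\mathbb{Z})\cup(-\frac{\pi}{3}+\pi\mathbb{Z})\cup\pi\mathbb{Z}$, $F_3=\{e^{ix}:x\in H_3\}$; $\mathcal{S}_i\mathcal{R}_n=\{z\mapsto\lambda z+b:\lambda\in F_i, b\in\mathbb{C}^n\}$, $\mathcal{SR}_n=\mathcal{S}_2\mathcal{R}_n\cup\mathcal{S}_3\mathcal{R}_n$. For a subgroup $G$: $\Lambda_G$ is the set of ratios of elements of $G$; $G_1=G\cap\mathcal{T}_n$ and $G_1(0)=\{f(0):f\in G_1\}$. *)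

(* Defs.v *)
From Stdlib Require Import Reals ZArith.
From Stdlib Require Vectors.Fin.
Open Scope R_scope.

Definition C := (R * R)%type.
Definition Cre (z : C) : R := fst z.
Definition Cim (z : C) : R := snd z.
Definition C0 : C := (0, 0).
Definition C1 : C := (1, 0).
Definition Cadd (z w : C) : C := (fst z + fst w, snd z + snd w).
Definition Csub (z w : C) : C := (fst z - fst w, snd z - snd w).
Definition Cmul (z w : C) : C :=
  (fst z * fst w - snd z * snd w, fst z * snd w + snd z * fst w).
Definition Cmod (z : C) : R := sqrt (fst z * fst z + snd z * snd z).
Definition Cexpi (x : R) : C := (cos x, sin x).

Definition Cn (n : nat) := Fin.t n -> C.
Definition zeroCn (n : nat) : Cn n := fun _ => C0.

Definition affmap (n : nat) (lam : C) (b : Cn n) : Cn n -> Cn n :=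
  fun z i => Cadd (Cmul lam (z i)) (b i).

Definition in_H (n : nat) (f : Cn n -> Cn n) : Prop :=
  exists lam b, lam <> C0 /\ f = affmap n lam b.

Definition is_subgroup_H (n : nat) (G : (Cn n -> Cn n) -> Prop) : Prop :=
  (forall f, G f -> in_H n f) /\
  G (fun z => z) /\
  (forall f g, G f -> G g -> G (fun z => f (g z))) /\
  (forall f, G f -> exists g, G g /\ (fun z => f (g z)) = (fun z => z)
                               /\ (fun z => g (f z)) = (fun z => z)).

Definition non_abelian (n : nat) (G : (Cn n -> Cn n) -> Prop) : Prop :=
  exists f g, G f /\ G g /\ (fun z => f (g z)) <> (fun z => g (f z)).

Definition ratios (n : nat) (G : (Cn n -> Cn n) -> Prop) (lam : C) : Prop :=
  exists f b, G f /\ lam <> C0 /\ f = affmap n lam b.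

Definition ratios_not_real (n : nat) (G : (Cn n -> Cn n) -> Prop) : Prop :=
  exists lam, ratios n G lam /\ Cim lam <> 0.

Definition H2 (x : R) : Prop :=
  (exists k : Z, x = PI / 2 + PI * IZR k) \/ (exists k : Z, x = PI * IZR k).
Definition F2 (lam : C) : Prop := exists x, H2 x /\ lam = Cexpi x.
Definition H3 (x : R) : Prop :=
  (exists k : Z, x = PI / 3 + PI * IZR k) \/
  (exists k : Z, x = - (PI / 3) + PI * IZR k) \/
  (exists k : Z, x = PI * IZR k).
Definition F3 (lam : C) : Prop := exists x, H3 x /\ lam = Cexpi x.

Definition S2R (n : nat) (f : Cn n -> Cn n) : Prop :=
  exists lam b, F2 lam /\ f = affmap n lam b.
Definition S3R (n : nat) (f : Cn n -> Cn n) : Prop :=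
  exists lam b, F3 lam /\ f = affmap n lam b.
Definition SR (n : nat) (f : Cn n -> Cn n) : Prop := S2R n f \/ S3R n f.

Definition is_translation (n : nat) (f : Cn n -> Cn n) : Prop :=
  exists b, f = affmap n C1 b.
Definition G1_at0 (n : nat) (G : (Cn n -> Cn n) -> Prop) (w : Cn n) : Prop :=
  exists f, G f /\ is_translation n f /\ w = f (zeroCn n).

(* density in C^n (standard topology, via the product/max metric) *)
Definition dense_in_Cn (n : nat) (S : Cn n -> Prop) : Prop :=
  forall (z : Cn n) (eps : R), 0 < eps ->
    exists w, S w /\ forall i : Fin.t n, Cmod (Csub (w i) (z i)) < eps.

Definition orbit (n : nat) (G : (Cn n -> Cn n) -> Prop) (z : Cn n) (w : Cn n) : Prop :=
  exists f, G f /\ w = f z.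

Definition has_dense_orbit (n : nat) (G : (Cn n -> Cn n) -> Prop) : Prop :=
  exists z, dense_in_Cn n (orbit n G z).

(* Main.v *)
Require Import Defs.
From Stdlib Require Import Reals ZArith.
From Stdlib Require Import Lia Lra FunctionalExtensionality Classical IndefiniteDescription.
Open Scope R_scope.

Lemma pair_eq (p q : Defs.C) : fst p = fst q -> snd p = snd q -> p = q.
Proof. destruct p, q; simpl; intros -> ->; reflexivity. Qed.

Lemma Cmod_fst (u : Defs.C) : Rabs (fst u) <= Cmod u.
Proof. unfold Cmod. rewrite <- sqrt_Rsqr_abs. apply sqrt_le_1_alt. unfold Rsqr; nra. Qed.

Lemma Cmod_snd (u : Defs.C) : Rabs (snd u) <= Cmod u.
Proof. unfold Cmod. rewrite <- sqrt_Rsqr_abs. apply sqrt_le_1_alt. unfold Rsqr; nra. Qed.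

Lemma Cmod_small (u : Defs.C) e : Rabs (fst u) < e/2 -> Rabs (snd u) < e/2 -> Cmod u < e.
Proof.
  intros H1 H2. unfold Cmod.
  assert (Ha : Rabs (fst u) * Rabs (fst u) = fst u * fst u).
  { rewrite <- Rabs_mult. apply Rabs_pos_eq. nra. }
  assert (Hb : Rabs (snd u) * Rabs (snd u) = snd u * snd u).
  { rewrite <- Rabs_mult. apply Rabs_pos_eq. nra. }
  pose proof (Rabs_pos (fst u)). pose proof (Rabs_pos (snd u)).
  apply Rle_lt_trans with (Rabs (fst u) + Rabs (snd u)); [|lra].
  rewrite <- (sqrt_Rsqr (Rabs (fst u) + Rabs (snd u))) by lra.
  apply sqrt_le_1_alt. unfold Rsqr. nra.
Qed.

Lemma pigeon (N : nat) : forall r : nat -> nat, (forall k, (k <= N)%nat -> (r k < N)%nat) ->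
  exists a b, (a < b)%nat /\ (b <= N)%nat /\ r a = r b.
Proof.
  induction N as [|N IH]; intros r Hr.
  - specialize (Hr 0%nat). lia.
  - destruct (classic (exists k, (k <= N)%nat /\ r k = r (S N))) as [[k [Hk1 Hk2]]|Hno].
    + exists k, (S N). split; [lia|split; [lia|auto]].
    + set (r' := fun k => if Nat.eqb (r k) N then r (S N) else r k).
      assert (Hr' : forall k, (k <= N)%nat -> (r' k < N)%nat).
      { intros k Hk. unfold r'. destruct (Nat.eqb_spec (r k) N).
        - assert (r (S N) <> N) by (intro; apply Hno; exists k; split; [lia|congruence]).
          specialize (Hr (S N) (le_n _)). lia.
        - specialize (Hr k ltac:(lia)). lia. }
      destruct (IH r' Hr') as [a [b [Hab [HbN Heq]]]].
      unfold r' in Heq.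
      destruct (Nat.eqb_spec (r a) N), (Nat.eqb_spec (r b) N).
      * exists a, b. split; [lia|split; [lia|congruence]].
      * exfalso. apply Hno. exists b. split; [lia|congruence].
      * exfalso. apply Hno. exists a. split; [lia|congruence].
      * exists a, b. split; [lia|split; [lia|auto]].
Qed.

Lemma divide_fact (N d : nat) : (1 <= d <= N)%nat -> Nat.divide d (fact N).
Proof.
  induction N; intros H. lia.
  simpl fact. destruct (Nat.eq_dec d (S N)).
  - subst. exists (fact N). lia.
  - change (fact N + N * fact N)%nat with (S N * fact N)%nat.
    rewrite Nat.mul_comm. apply Nat.divide_mul_l. apply IHN. lia.
Qed.

Lemma angle_of (lam : Defs.C) : F2 lam \/ F3 lam -> exists m : Z, lam = Cexpi (PI/6 * IZR m).
Proof.
  intros [[x [Hx ->]]|[x [Hx ->]]].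
  - destruct Hx as [[k ->]|[k ->]].
    + exists (6*k+3)%Z. f_equal. rewrite plus_IZR, mult_IZR. simpl. field.
    + exists (6*k)%Z. f_equal. rewrite mult_IZR. simpl. field.
  - destruct Hx as [[k ->]|[[k ->]|[k ->]]].
    + exists (6*k+2)%Z. f_equal. rewrite plus_IZR, mult_IZR. simpl. field.
    + exists (6*k-2)%Z. f_equal. rewrite minus_IZR, mult_IZR. simpl. field.
    + exists (6*k)%Z. f_equal. rewrite mult_IZR. simpl. field.
Qed.

Lemma cexpi_shift (m : Z) (k : nat) :
  Cexpi (PI/6 * IZR (m + 12 * Z.of_nat k)) = Cexpi (PI/6 * IZR m).
Proof.
  unfold Cexpi.
  replace (PI/6 * IZR (m + 12 * Z.of_nat k)) with (PI/6 * IZR m + 2 * INR k * PI).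
  - rewrite cos_period, sin_period. reflexivity.
  - rewrite plus_IZR, mult_IZR, <- INR_IZR_INZ. simpl. field.
Qed.

Lemma cexpi_mod (m1 m2 : Z) : (m1 mod 12 = m2 mod 12)%Z ->
  Cexpi (PI/6 * IZR m1) = Cexpi (PI/6 * IZR m2).
Proof.
  intros H.
  pose proof (Z_div_mod_eq_full m1 12). pose proof (Z_div_mod_eq_full m2 12).
  destruct (Z_le_gt_dec (m1/12) (m2/12)).
  - replace m2 with (m1 + 12 * Z.of_nat (Z.to_nat (m2/12 - m1/12)))%Z by lia.
    rewrite cexpi_shift. reflexivity.
  - replace m1 with (m2 + 12 * Z.of_nat (Z.to_nat (m1/12 - m2/12)))%Z by lia.
    rewrite cexpi_shift. reflexivity.
Qed.

Section S.
Variable n : nat.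
Variable G : (Cn n -> Cn n) -> Prop.
Hypothesis HG : is_subgroup_H n G.

Lemma G1_zero : G1_at0 n G (zeroCn n).
Proof.
  destruct HG as [_ [Hid _]]. exists (fun z => z). split; [auto|split; [|auto]].
  exists (zeroCn n). extensionality z. extensionality i. unfold affmap, zeroCn, Cadd, Cmul, Defs.C1, Defs.C0.
  apply pair_eq; simpl; ring.
Qed.

Lemma G1_mult (h : Cn n) : G1_at0 n G h -> forall c : nat, exists u, G1_at0 n G u /\
  forall i, fst (u i) = INR c * fst (h i) /\ snd (u i) = INR c * snd (h i).
Proof.
  intros Hh c. induction c as [|c IH].
  - exists (zeroCn n). split; [apply G1_zero|]. intros i. simpl. unfold zeroCn, Defs.C0; simpl; split; ring.
  - destruct IH as [u [Hu Hui]].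
    destruct Hh as [f [Gf [[a ->] Hh0]]].
    destruct Hu as [g [Gg [[b ->] Hu0]]].
    destruct HG as [_ [_ [Hcomp _]]].
    exists (fun i => Cadd (a i) (b i)). split.
    + exists (fun z => affmap n Defs.C1 a (affmap n Defs.C1 b z)). split; [apply Hcomp; auto|split].
      * exists (fun i => Cadd (a i) (b i)). extensionality z. extensionality i.
        unfold affmap, Cadd, Cmul, Defs.C1. apply pair_eq; simpl; ring.
      * extensionality i. unfold affmap, zeroCn, Cadd, Cmul, Defs.C1, Defs.C0. apply pair_eq; simpl; ring.
    + intros i. destruct (Hui i) as [E1 E2].
      rewrite S_INR.
      rewrite Hh0 in E1, E2 |- *. rewrite Hu0 in E1, E2.
      unfold affmap, zeroCn, Cadd, Cmul, Defs.C1, Defs.C0 in *. simpl fst in *. simpl snd in *. split; nra.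
Qed.

Lemma diff_in_H f1 f2 lam b1 b2 : G f1 -> G f2 -> f1 = affmap n lam b1 -> f2 = affmap n lam b2 ->
  G1_at0 n G (fun i => Csub (b2 i) (b1 i)).
Proof.
  intros G1 G2 E1 E2.
  destruct HG as [_ [_ [Hcomp Hinv]]].
  destruct (Hinv f1 G1) as [g [Gg [Hfg _]]].
  exists (fun z => f2 (g z)). split; [apply Hcomp; auto|split].
  - exists (fun i => Csub (b2 i) (b1 i)). extensionality w. extensionality i.
    assert (Hw := f_equal (fun F => F w i) Hfg). simpl in Hw.
    rewrite E1 in Hw. rewrite E2. unfold affmap, Cadd, Cmul, Csub, Defs.C1 in *.
    apply pair_eq; simpl.
    + apply (f_equal fst) in Hw; simpl in Hw. lra.
    + apply (f_equal snd) in Hw; simpl in Hw. lra.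
  - extensionality i.
    assert (Hw := f_equal (fun F => F (zeroCn n) i) Hfg). simpl in Hw.
    rewrite E1 in Hw. rewrite E2. unfold affmap, Cadd, Cmul, Csub, zeroCn, Defs.C0 in *.
    apply pair_eq; simpl.
    + apply (f_equal fst) in Hw; simpl in Hw. lra.
    + apply (f_equal snd) in Hw; simpl in Hw. lra.
Qed.

End S.

Definition vsc (n : nat) (t : R) (x : Cn n) : Cn n := fun i => (t * fst (x i), t * snd (x i)).

Theorem corollary1p2 (n : nat) (G : (Cn n -> Cn n) -> Prop) :
  is_subgroup_H n G ->
  non_abelian n G ->
  ratios_not_real n G ->
  (forall f, G f -> SR n f) ->
  (has_dense_orbit n G <-> dense_in_Cn n (G1_at0 n G)).
Proof.
  intros HG _ _ HSR. split.
  2:{ intros Hd. exists (zeroCn n). intros z eps He.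
      destruct (Hd z eps He) as [w [[f [Gf [_ Hw]]] Hwz]].
      exists w. split; [exists f; auto|auto]. }
  intros [z Hz] x eps Heps.
  assert (HMex : exists M, M = INR (fact 12) /\ 0 < M).
  { exists (INR (fact 12)). split; [reflexivity|apply lt_0_INR, lt_O_fact]. }
  destruct HMex as [M [HfM HM]].
  set (del := eps / (4 * M)).
  assert (Hdel : 0 < del) by (unfold del; apply Rdiv_lt_0_compat; lra).
  assert (Hch : forall k : nat, { p : ((Cn n -> Cn n) * Defs.C) * (Cn n * Z) |
     G (fst (fst p)) /\ fst (fst p) = affmap n (snd (fst p)) (fst (snd p)) /\
     snd (fst p) = Cexpi (PI/6 * IZR (snd (snd p))) /\
     forall i, Cmod (Csub (fst (fst p) z i) (vsc n (INR k / M) x i)) < del }).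
  { intro k. apply constructive_indefinite_description.
    destruct (Hz (vsc n (INR k / M) x) del Hdel) as [w [[f [Gf ->]] Hw]].
    destruct (HSR f Gf) as [[lam [b [Hl Hf]]]|[lam [b [Hl Hf]]]].
    - destruct (angle_of lam (or_introl Hl)) as [m Hm].
      exists ((f, lam), (b, m)). simpl. auto.
    - destruct (angle_of lam (or_intror Hl)) as [m Hm].
      exists ((f, lam), (b, m)). simpl. auto. }
  set (r := fun k => Z.to_nat (snd (snd (proj1_sig (Hch k))) mod 12)).
  destruct (pigeon 12 r) as [a [b [Hab [Hb Hr]]]].
  { intros k _. unfold r. pose proof (Z.mod_pos_bound (snd (snd (proj1_sig (Hch k)))) 12). lia. }
  unfold r in Hr.
  set (pa := proj1_sig (Hch a)) in *. assert (Pa := proj2_sig (Hch a)). fold pa in Pa.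
  set (pb := proj1_sig (Hch b)) in *. assert (Pb := proj2_sig (Hch b)). fold pb in Pb.
  clearbody pa pb. clear r.
  destruct pa as [[fa la] [ba ma]]. destruct Pa as [Ga [Ea [La Da]]].
  destruct pb as [[fb lb] [bb mb]]. destruct Pb as [Gb [Eb [Lb Db]]].
  cbn [fst snd] in *.
  assert (Hmod : (ma mod 12 = mb mod 12)%Z).
  { pose proof (Z.mod_pos_bound ma 12). pose proof (Z.mod_pos_bound mb 12). lia. }
  assert (Hl : la = lb) by (rewrite La, Lb; apply cexpi_mod; auto).
  subst lb. rewrite <- Hl in Eb.
  pose proof (diff_in_H n G HG fa fb la ba bb Ga Gb Ea Eb) as Hh.
  destruct (divide_fact 12 (b - a)) as [c Hc]; [lia|].
  destruct (G1_mult n G HG _ Hh c) as [u [Hu Hui]].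
  exists u. split; [auto|]. intros i.
  assert (HMc : M = INR c * INR (b - a)) by (rewrite HfM, Hc, mult_INR; ring).
  clear Hc HfM.
  rewrite minus_INR in HMc by lia.
  assert (Hba : 1 <= INR b - INR a).
  { rewrite <- minus_INR by lia. apply (le_INR 1). lia. }
  assert (Hc0 : 0 < INR c) by nra.
  assert (HcM : INR c <= M) by nra.
  pose proof (Rle_lt_trans _ _ _ (Cmod_fst _) (Da i)) as Fa.
  pose proof (Rle_lt_trans _ _ _ (Cmod_snd _) (Da i)) as Sa.
  pose proof (Rle_lt_trans _ _ _ (Cmod_fst _) (Db i)) as Fb.
  pose proof (Rle_lt_trans _ _ _ (Cmod_snd _) (Db i)) as Sb.
  clear Da Db.
  destruct (Hui i) as [U1 U2].
  rewrite Ea in Fa, Sa. rewrite Eb in Fb, Sb.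
  unfold affmap, Csub, Cadd, vsc in Fa, Sa, Fb, Sb. cbn [fst snd] in Fa, Sa, Fb, Sb, U1, U2.
  unfold Csub in U1, U2. cbn [fst snd] in U1, U2.
  apply Cmod_small; unfold Csub; cbn [fst snd].
  - set (P := fst (Cmul la (z i))) in *. set (X := fst (x i)) in *.
    set (e1 := P + fst (bb i) - INR b / M * X) in *.
    set (e2 := P + fst (ba i) - INR a / M * X) in *.
    assert (E : fst (u i) - X = INR c * (e1 - e2)).
    { rewrite U1. unfold e1, e2. field_simplify_eq; [|lra]. rewrite HMc. ring. }
    rewrite E, Rabs_mult, (Rabs_pos_eq (INR c)) by lra.
    pose proof (Rabs_triang e1 (- e2)). rewrite Rabs_Ropp in H.
    assert (Rabs (e1 - e2) < 2 * del) by (unfold Rminus; lra).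
    assert (INR c * Rabs (e1 - e2) < INR c * (2*del)) by (apply Rmult_lt_compat_l; lra).
    assert (INR c * (2 * del) <= M * (2*del)) by nra.
    assert (M * (2 * del) = eps / 2) by (unfold del; field; lra).
    lra.
  - set (P := snd (Cmul la (z i))) in *. set (X := snd (x i)) in *.
    set (e1 := P + snd (bb i) - INR b / M * X) in *.
    set (e2 := P + snd (ba i) - INR a / M * X) in *.
    assert (E : snd (u i) - X = INR c * (e1 - e2)).
    { rewrite U2. unfold e1, e2. field_simplify_eq; [|lra]. rewrite HMc. ring. }
    rewrite E, Rabs_mult, (Rabs_pos_eq (INR c)) by lra.
    pose proof (Rabs_triang e1 (- e2)). rewrite Rabs_Ropp in H.
    assert (Rabs (e1 - e2) < 2 * del) by (unfold Rminus; lra).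
    assert (INR c * Rabs (e1 - e2) < INR c * (2*del)) by (apply Rmult_lt_compat_l; lra).
    assert (INR c * (2 * del) <= M * (2*del)) by nra.
    assert (M * (2 * del) = eps / 2) by (unfold del; field; lra).
    lra.
Qed.
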